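(* Let $G$ be a looped simple graph, let $B$ be a transversal of $W(G)$ that is a basis of $M[IAS(G)]$, and let $C$ be a transversal with $B\cap C=\emptyset$. For $v\in V(G)$ let $B(v)$ and $C(v)$ denote the elements of $\tau_G(v)$ lying in $B$ and in $C$, respectively. Let $H$ be a looped simple graph with $V(H)=V(G)$ in which two distinct vertices $v,w$ are adjacent if and only if $B(w)$ belongs to the fundamental circuit of $C(v)$ with respect to $B$ in $M[IAS(G)]$. Then $H$ is well defined (this relation is symmetric in $v,w$), $H$ is locally equivalent to $G$, and there is an induced isomorphism $\beta:M[IAS(G)]\to M[IAS(H)]$ with $\beta(B)=\Phi(H)=\{\phi_H(v):v\in V(H)\}$.
   Context: A looped simple graph is a finite graph in which each vertex carries at most one loop and no two distinct vertices are joined by more than one edge. ''Adjacent''/''neighbors'' refer only to distinct vertices joined by a non-loop edge; $N_G(v)$ is the set of neighbors of $v$. $A(G)$ is the $V(G)\times V(G)$ matrix over $GF(2)$ with diagonal entry $1$ exactly at looped vertices and off-diagonal entry $1$ exactly for adjacent pairs. $IAS(G)=(I\mid A(G)\mid A(G)+I)$ over $GF(2)$, rows indexed by $V(G)$; the $v$-columns of the three blocks are labelled $\phi_G(v),\chi_G(v),\psi_G(v)$. $M[IAS(G)]$ is the binary column matroid of $IAS(G)$ on $W(G)=\{\phi_G(v),\chi_G(v),\psi_G(v):v\in V(G)\}$. The vertex triple of $v$ is $\tau_G(v)=\{\phi_G(v),\chi_G(v),\psi_G(v)\}$; a transversal meets each vertex triple in exactly one element. For a basis $B$ and element $e\notin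 B$, the fundamental circuit of $e$ with respect to $B$ is the unique circuit contained in $B\cup\{e\}$. Local equivalence: $G_\ell^v$ complements the loop status of $v$; $G_s^v$ complements the adjacency status of every pair of distinct neighbors of $v$; $G_{ns}^v$ does this and also complements the loop status of every neighbor of $v$. $H$ is locally equivalent to $G$ if obtained from $G$ by a finite sequence of such operations. Induced isomorphisms: for each such operation producing $G'$ from $G$ there is a matroid isomorphism $M[IAS(G)]\to M[IAS(G')]$ sending $\alpha_G(x)\mapsto\alpha_{G'}(x)$ for all $\alpha\in\{\phi,\chi,\psi\}$, $x\in V(G)$, except: for $G'=G_\ell^v$, $\chi_G(v)\mapsto\psi_{G'}(v)$, $\psi_G(v)\mapsto\chi_{G'}(v)$; for $G'=G_{ns}^v$ with $v$ unlooped, $\phi_G(v)\mapsto\psi_{G'}(v)$, $\psi_G(v)\mapsto\phi_{G'}(v)$, and with $v$ looped, $\phi_G(v)\mapsto\chi_{G'}(v)$, $\chi_G(v)\mapsto\phi_{G'}(v)$; for $G'=G_s^v$, the same exchange at $v$ as for $G_{ns}^v$ and in addition, for every $w\in N_G(v)$, $\chi_G(w)\mapsto\psi_{G'}(w)$, $\psi_G(w)\mapsto\chi_{G'}(w)$. An induced isomorphism $M[IAS(G)]\to M[IAS(H)]$ is a composition of such isomorphisms along a sequence of operations transforming $G$ into $H$. *)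

(* Defs.v *)
From mathcomp Require Import all_boot.
Set Implicit Arguments. Unset Strict Implicit. Unset Printing Implicit Defensive.

(* A looped simple graph on the finite vertex type V is encoded as a boolean
   relation G : V -> V -> bool, assumed symmetric (in the theorem):
   G v v = true  iff v carries a loop,
   G v w = true (v <> w) iff v and w are adjacent.
   Thus G is exactly the matrix A(G) over GF(2) = bool. *)

Section Defs.
Variable V : finType.

Definition tphi : 'I_3 := @Ordinal 3 0 isT.
Definition tchi : 'I_3 := @Ordinal 3 1 isT.
Definition tpsi : 'I_3 := @Ordinal 3 2 isT.

(* Elements of W(G): (v, t) is phi_G(v), chi_G(v) or psi_G(v). *)
Definition elt := (V * 'I_3)%type.

Definition nbr (G : V -> V -> bool) (v : V) : {set V} :=
  [set w | (w != v) && G v w].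

(* Column of IAS(G) labelled by x, as a vector V -> GF(2) (GF(2) = bool, + = xor). *)
Definition iascol (G : V -> V -> bool) (x : elt) (u : V) : bool :=
  let: (v, t) := x in
  if t == tphi then u == v
  else if t == tchi then G u v
  else G u v (+) (u == v).

(* Over GF(2), a set of columns is linearly dependent iff a nonempty subset
   of them sums to zero. *)
Definition dependent (G : V -> V -> bool) (T : {set elt}) : Prop :=
  exists D : {set elt}, [/\ D \subset T, D != set0 &
     forall u : V, \big[addb/false]_(x in D) iascol G x u = false].

Definition independent G (T : {set elt}) : Prop := ~ dependent G T.

Definition is_basis G (B : {set elt}) : Prop :=
  independent G B /\ forall x, x \notin B -> dependent G (x |: B).

Definition circuit G (D : {set elt}) : Prop :=
  dependent G D /\ forall D' : {set elt}, D' \proper D -> independent G D'.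

Definition in_fund G (B : {set elt}) (e x : elt) : Prop :=
  exists D : {set elt}, [/\ circuit G D, D \subset e |: B & x \in D].

Definition transv (f : V -> 'I_3) : {set elt} := [set (v, f v) | v : V].

Definition Phi : {set elt} := [set (v, tphi) | v : V].

Inductive op := Oloop of V | Os of V | Ons of V.

Definition apply_op (o : op) (G : V -> V -> bool) : V -> V -> bool :=
  match o with
  | Oloop v => fun x y => if (x == v) && (y == v) then ~~ G x y else G x y
  | Os v => fun x y => if [&& x != y, x \in nbr G v & y \in nbr G v]
                      then ~~ G x y else G x y
  | Ons v => fun x y => if (x \in nbr G v) && (y \in nbr G v)
                       then ~~ G x y else G x y
  end.

Fixpoint apply_ops (s : seq op) (G : V -> V -> bool) : V -> V -> bool :=
  match s with [::] => G | o :: s' => apply_ops s' (apply_op o G) end.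

Definition swapt (a b t : 'I_3) : 'I_3 :=
  if t == a then b else if t == b then a else t.

(* Element map of the isomorphism M[IAS(G)] -> M[IAS(G')] induced by one operation. *)
Definition op_map (o : op) (G : V -> V -> bool) (x : elt) : elt :=
  let: (w, t) := x in
  match o with
  | Oloop v => if w == v then (w, swapt tchi tpsi t) else (w, t)
  | Ons v => if w == v then
               (if G v v then (w, swapt tphi tchi t) else (w, swapt tphi tpsi t))
             else (w, t)
  | Os v => if w == v then
               (if G v v then (w, swapt tphi tchi t) else (w, swapt tphi tpsi t))
             else if w \in nbr G v then (w, swapt tchi tpsi t) else (w, t)
  end.

Fixpoint induced (s : seq op) (G : V -> V -> bool) (x : elt) : elt :=
  match s with
  | [::] => x
  | o :: s' => induced s' (apply_op o G) (op_map o G x)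
  end.

End Defs.

(* Main.v *)
Require Import Defs.
From mathcomp Require Import all_boot.
Set Implicit Arguments. Unset Strict Implicit. Unset Printing Implicit Defensive.

Section S.
Variable V : finType.
Implicit Types (G : V -> V -> bool) (B D S T : {set elt V}).

Definition zs G D := forall u, \big[addb/false]_(x in D) iascol G x u = false.

Lemma symdiff_sum (F : elt V -> bool) S1 S2 :
  \big[addb/false]_(x in (S1 :\: S2) :|: (S2 :\: S1)) F x =
  (\big[addb/false]_(x in S1) F x) (+) (\big[addb/false]_(x in S2) F x).
Proof.
rewrite (@big_setID _ _ _ _ (S1 :\: S2 :|: S2 :\: S1) S1) (@big_setID _ _ _ _ S1 S2) (@big_setID _ _ _ _ S2 S1).
have -> : (S1 :\: S2 :|: S2 :\: S1) :&: S1 = S1 :\: S2.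
  by apply/setP => x; rewrite !inE; case: (x \in S1); case: (x \in S2).
have -> : (S1 :\: S2 :|: S2 :\: S1) :\: S1 = S2 :\: S1.
  by apply/setP => x; rewrite !inE; case: (x \in S1); case: (x \in S2).
rewrite setIC.
case: (\big[addb/false]_(i in S1 :\: S2) F i);
case: (\big[addb/false]_(i in S2 :\: S1) F i);
by case: (\big[addb/false]_(i in S2 :&: S1) F i).
Qed.

Lemma rep_unique G B e S1 S2 : independent G B ->
  S1 \subset B -> S2 \subset B -> e \notin S1 -> e \notin S2 ->
  zs G (e |: S1) -> zs G (e |: S2) -> S1 = S2.
Proof.
move=> HB s1 s2 e1 e2 z1 z2.
case: (boolP ((S1 :\: S2) :|: (S2 :\: S1) == set0)).
  rewrite setU_eq0 !setD_eq0 => /andP[a1 a2]; apply/eqP; rewrite eqEsubset a1 a2 //.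
move=> ne; exfalso; apply: HB.
exists ((S1 :\: S2) :|: (S2 :\: S1)); split => //.
  rewrite subUset; apply/andP; split; apply: subset_trans (subsetDl _ _) _ => //.
move=> u; rewrite symdiff_sum.
move: (z1 u) (z2 u); rewrite !big_setU1 //.
by case: (iascol G e u); case: (\big[addb/false]_(x in S1) iascol G x u);
   case: (\big[addb/false]_(x in S2) iascol G x u).
Qed.

Lemma sub_U1 (e : elt V) D B : D \subset e |: B -> e \notin D -> D \subset B.
Proof.
move=> /subsetP sub eD; apply/subsetP => y yD.
move: (sub y yD); rewrite in_setU1; case/orP => // /eqP ey.
by move: eD; rewrite -ey yD.
Qed.

Lemma dep_self G D : D != set0 -> zs G D -> dependent G D.
Proof. by move=> n z; exists D; split. Qed.

Lemma fund_char G B e S x : independent G B -> e \notin B -> S \subset B ->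
  zs G (e |: S) -> (in_fund G B e x <-> x \in e |: S).
Proof.
move=> HB eB SB zS.
have eS : e \notin S by apply: contra eB; apply: (subsetP SB).
split.
- move=> [D [[[D0 [s0 n0 z0]] min] sub xD]].
  have D0D : D0 = D.
    apply/eqP; case: (boolP (D0 == D)) => // ne.
    exfalso; apply: (min D0); first by rewrite properEneq ne s0.
    exact: dep_self.
  subst D0.
  have eD : e \in D.
    case: (boolP (e \in D)) => // eD; exfalso; apply: HB.
    by exists D; split => //; apply: sub_U1 sub eD.
  have SS : D :\ e = S.
    apply: (rep_unique HB) => //.
    - by apply: sub_U1 (subset_trans (subD1set _ _) sub) _; rewrite !inE eqxx.
    - by rewrite !inE eqxx.
    - exact: eS.
    - by rewrite setD1K.
  by rewrite -SS setD1K.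
- move=> xS; exists (e |: S); split => //; last by apply: setUS.
  split; first by apply: dep_self => //; apply/set0Pn; exists e; rewrite setU11.
  move=> D' prop [D0 [s0 n0 z0]].
  have s0' : D0 \subset e |: S by apply: subset_trans s0 (proper_sub prop).
  have eD : e \in D0.
    case: (boolP (e \in D0)) => // eD; exfalso; apply: HB.
    by exists D0; split => //; apply: subset_trans SB; apply: sub_U1 s0' eD.
  have SS : D0 :\ e = S.
    apply: (rep_unique HB) => //.
    - by apply: subset_trans SB; apply: sub_U1 (subset_trans (subD1set _ _) s0') _; rewrite !inE eqxx.
    - by rewrite !inE eqxx.
    - exact: eS.
    - by rewrite setD1K.
  move: prop; rewrite properE => /andP[_]; rewrite -SS setD1K //.
  by rewrite s0.
Qed.

Lemma rep_exists G B e : is_basis G B -> e \notin B ->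
  exists S, S \subset B /\ zs G (e |: S).
Proof.
move=> [HB max] eB; case: (max e eB) => D0 [s0 n0 z0].
have eD : e \in D0.
  case: (boolP (e \in D0)) => // eD; exfalso; apply: HB.
  by exists D0; split => //; apply: sub_U1 s0 eD.
exists (D0 :\ e); split; last by rewrite setD1K.
by apply: sub_U1 (subset_trans (subD1set _ _) s0) _; rewrite !inE eqxx.
Qed.

Lemma I3_cases (t : 'I_3) : [\/ t = tphi, t = tchi | t = tpsi].
Proof.
case: t => [[|[|[|k]]] Ht].
- by constructor 1; apply: val_inj.
- by constructor 2; apply: val_inj.
- by constructor 3; apply: val_inj.
- by [].
Qed.

Lemma ons_col G v (Hs : forall x y, G x y = G y x) x u :
  iascol (apply_op (Ons v) G) (op_map (Ons v) G x) u =
  iascol G x u (+) (iascol G x v && (u \in nbr G v)).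
Proof.
case: x => w t.
have nb : forall z, (z \in nbr G v) = (z != v) && G v z by move=> z; rewrite inE.
case: (I3_cases t) => ->; rewrite /op_map /=;
(case: (eqVneq w v) => [->|wv]; [case Gvv: (G v v)|]) => /=; rewrite /iascol /= ?nb ?eqxx /=;
  case: (eqVneq u v) => [->|uv] /=; rewrite ?eqxx ?Gvv /=.
all: try (rewrite ?(negbTE wv) /=).
all: rewrite ?(Hs u v) ?(Hs w v) ?(Hs u w) ?Gvv /=.
all: rewrite ?andbF ?addbF ?addbb ?eqxx //.
all: by case: (G v u); case: (G v w); case: (G w u); case: (u == w).
Qed.

Section Ons.
Variables (G : V -> V -> bool) (v : V).
Hypothesis Hs : forall x y, G x y = G y x.
Let G' := apply_op (Ons v) G.
Let be := op_map (Ons v) G.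

Lemma ons_map_def w t : be (w, t) =
  (w, if w == v then (if G v v then swapt tphi tchi t else swapt tphi tpsi t) else t).
Proof. by rewrite /be /=; case: (w == v) => //; case: (G v v). Qed.

Lemma swapt_inv a b t : swapt a b (swapt a b t) = t.
Proof.
rewrite /swapt; case: (eqVneq t a) => [->|ta]; rewrite ?eqxx.
  by case: (eqVneq b a) => [->|ba]; rewrite ?eqxx.
case: (eqVneq t b) => [->|tb]; rewrite ?eqxx //.
by rewrite (negbTE ta) (negbTE tb).
Qed.

Lemma ons_invol x : be (be x) = x.
Proof.
case: x => w t; rewrite !ons_map_def.
case: (eqVneq w v) => [->|wv]; rewrite ?eqxx ?(negbTE wv) //.
by case: (G v v); rewrite swapt_inv.
Qed.

Lemma ons_inj : injective be.
Proof. exact: (can_inj ons_invol). Qed.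

Lemma ons_sym x y : G' x y = G' y x.
Proof. by rewrite /G' /= andbC Hs. Qed.

Lemma ons_sum D u :
  \big[addb/false]_(y in be @: D) iascol G' y u =
  (\big[addb/false]_(x in D) iascol G x u) (+)
  ((\big[addb/false]_(x in D) iascol G x v) && (u \in nbr G v)).
Proof.
rewrite big_imset; last by move=> x y _ _; apply: ons_inj.
under eq_bigr => x _ do rewrite ons_col //.
rewrite big_split /=; congr (_ (+) _).
case: (u \in nbr G v); first by under eq_bigr => x _ do rewrite andbT; rewrite andbT.
by rewrite andbF big1 // => x _; rewrite andbF.
Qed.

Lemma ons_zs D : zs G D <-> zs G' (be @: D).
Proof.
split => z u; first by rewrite ons_sum (z u) (z v).
have zv : \big[addb/false]_(x in D) iascol G x v = false.
  by move: (z v); rewrite ons_sum [v \in _]inE eqxx /= andbF addbF.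
by move: (z u); rewrite ons_sum zv andFb addbF.
Qed.

Lemma ons_dep T : dependent G T <-> dependent G' (be @: T).
Proof.
split.
- move=> [D [s n z]]; exists (be @: D); split.
  + exact: imsetS.
  + by rewrite imset_eq0.
  + by move/ons_zs: z.
- move=> [D' [s n z]].
  pose D := T :&: be @^-1: D'.
  have eD : be @: D = D'.
    apply/setP => y; apply/imsetP/idP.
      by move=> [x]; rewrite !inE => /andP[_ ?] ->.
    move=> yD; move/subsetP: s => /(_ y yD) /imsetP [x xT yx].
    by exists x => //; rewrite !inE xT -yx.
  exists D; split.
  + exact: subsetIl.
  + by rewrite -(imset_eq0 be) eD.
  + by apply/ons_zs; rewrite eD.
Qed.

Lemma ons_basis B : is_basis G B -> is_basis G' (be @: B).
Proof.
move=> [HB max]; split.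
  by move/ons_dep.
move=> y yB.
have yB' : be y \notin B.
  by apply: contra yB => H; rewrite -(ons_invol y); apply: imset_f.
by rewrite -{1}(ons_invol y) -imsetU1; apply/ons_dep; apply: max.
Qed.

Lemma ons_fund B e x : is_basis G B -> e \notin B ->
  (in_fund G B e x <-> in_fund G' (be @: B) (be e) (be x)).
Proof.
move=> HBb eB; case: (rep_exists HBb eB) => S [SB zS].
have HB' := ons_basis HBb.
have eB' : be e \notin be @: B by rewrite mem_imset //; apply: ons_inj.
have h1 := fund_char x HBb.1 eB SB zS.
have SB' : be @: S \subset be @: B by apply: imsetS.
have zS' : zs G' (be e |: be @: S) by rewrite -imsetU1; apply/ons_zs.
have h2 := fund_char (be x) HB'.1 eB' SB' zS'.
rewrite -imsetU1 mem_imset in h2; last exact: ons_inj.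
by split => H; [apply/h2; apply/h1 | apply/h1; apply/h2].
Qed.

End Ons.

Lemma mem_transv (f : V -> 'I_3) w t : ((w, t) \in transv f) = (t == f w).
Proof.
apply/imsetP/eqP => [[u _ [-> ->]] //|->]; by exists w.
Qed.

Definition bmap G v (f : V -> 'I_3) u := (op_map (Ons v) G (u, f u)).2.

Lemma be_pair G v u t : op_map (Ons v) G (u, t) = (u, (op_map (Ons v) G (u, t)).2).
Proof. by rewrite ons_map_def. Qed.

Lemma bmap_def G v f u : bmap G v f u =
  if u == v then (if G v v then swapt tphi tchi (f u) else swapt tphi tpsi (f u)) else f u.
Proof. by rewrite /bmap ons_map_def. Qed.

Lemma transv_map G v f : op_map (Ons v) G @: transv f = transv (bmap G v f).
Proof. by rewrite /transv -imset_comp; apply: eq_imset => u; exact: be_pair. Qed.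

Definition Concl G (b c : V -> 'I_3) := exists s : seq (op V),
  (forall v w, v != w -> (apply_ops s G v w <-> in_fund G (transv b) (v, c v) (w, b w)))
  /\ [set induced s G x | x in transv b] = Phi V.

Section Step.
Variables (G : V -> V -> bool) (z : V) (b c : V -> 'I_3).
Hypothesis Hs : forall x y, G x y = G y x.
Hypothesis Hb : is_basis G (transv b).
Hypothesis Hbc : forall v, b v != c v.

Lemma step_pre : [/\ forall x y, apply_op (Ons z) G x y = apply_op (Ons z) G y x,
   is_basis (apply_op (Ons z) G) (transv (bmap G z b)) &
   forall v, bmap G z b v != bmap G z c v].
Proof.
split.
- exact: ons_sym.
- by rewrite -transv_map; apply: ons_basis.
- move=> v; apply/negP => /eqP e.
  have : op_map (Ons z) G (v, b v) = op_map (Ons z) G (v, c v).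
    by rewrite (be_pair G z v (b v)) (be_pair G z v (c v)); congr (_, _).
  by move/ons_inj => [] /eqP; apply/negP.
Qed.

Lemma step_concl : Concl (apply_op (Ons z) G) (bmap G z b) (bmap G z c) -> Concl G b c.
Proof.
move=> [s [h1 h2]]; exists (Ons z :: s); split.
- move=> v w vw /=.
  have eB : (v, c v) \notin transv b by rewrite mem_transv eq_sym.
  have := @ons_fund G z Hs _ (v, c v) (w, b w) Hb eB.
  rewrite transv_map be_pair [op_map _ _ (w, _)]be_pair => h.
  have := h1 v w vw; rewrite /bmap.
  by move=> h'; split => H; [apply/h; apply/h' | apply/h'; apply/h].
- by rewrite -h2 -transv_map -[RHS]imset_comp; apply: eq_imset.
Qed.
End Step.

Lemma sum_ind (A : {set V}) u : \big[addb/false]_(u' in A) (u == u') = (u \in A).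
Proof.
case: (boolP (u \in A)) => uA.
  rewrite (bigD1 u) //= eqxx big1 // => u' /andP[_ ne].
  by rewrite eq_sym (negbTE ne).
by rewrite big1 // => u' u'A; apply/negP => /eqP e; move: uA; rewrite e u'A.
Qed.

Lemma sum_phi (Gr : V -> V -> bool) (A : {set V}) u :
  \big[addb/false]_(x in [set (u', tphi) | u' in A]) iascol Gr x u = (u \in A).
Proof.
rewrite big_imset; last by move=> ? ? _ _ [].
by rewrite -sum_ind; apply: eq_bigr => u' _; rewrite /iascol eqxx.
Qed.

Lemma base (Gr : V -> V -> bool) b c : (forall x y, Gr x y = Gr y x) -> (forall v, b v = tphi) ->
  is_basis Gr (transv b) -> (forall v, b v != c v) -> Concl Gr b c.
Proof.
move=> Hs Hphi Hb Hbc; exists [::]; split.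
- move=> v w vw /=.
  pose S := [set (u, tphi) | u in [set u | iascol Gr (v, c v) u]].
  have SB : S \subset transv b.
    by apply/subsetP => x /imsetP [u _ ->]; rewrite mem_transv Hphi.
  have eB : (v, c v) \notin transv b by rewrite mem_transv eq_sym.
  have eS : (v, c v) \notin S.
    apply/imsetP => [[u _ [_ e]]]; move: (Hbc v); by rewrite Hphi e eqxx.
  have zS : zs Gr ((v, c v) |: S).
    by move=> u; rewrite big_setU1 // sum_phi inE; case: (iascol Gr (v, c v) u).
  have h := fund_char (w, b w) Hb.1 eB SB zS.
  have E : ((w, b w) \in (v, c v) |: S) = Gr v w.
    rewrite in_setU1 Hphi mem_imset; last by move=> ? ? [].
    have -> : ((w, tphi) == (v, c v)) = false.
      by apply/negP => /eqP [] e; move: vw; rewrite e eqxx.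
    rewrite inE /=.
    have cphi : c v != tphi by rewrite -(Hphi v) eq_sym.
    by case: (I3_cases (c v)) cphi => -> // _; rewrite /iascol /= ?(eq_sym w v) ?(negbTE vw) ?addbF Hs.
  rewrite E in h; by split => H; [apply/h | apply/h].
- rewrite imset_id; apply: eq_imset => u; by rewrite Hphi.
Qed.

Definition good G (b : V -> 'I_3) v :=
  ((b v == tchi) && G v v) || ((b v == tpsi) && ~~ G v v).
Definition nonphi (b : V -> 'I_3) := [set u | b u != tphi].

Lemma bmap_nonphi G w b : b w != tphi -> nonphi (bmap G w b) \subset nonphi b.
Proof.
move=> bw; apply/subsetP => u; rewrite !inE bmap_def.
by case: (eqVneq u w) => [->|].
Qed.

Lemma bmap_good G v b : good G b v -> nonphi (bmap G v b) \subset nonphi b :\ v.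
Proof.
move=> gv; apply/subsetP => u; rewrite !inE bmap_def.
case: (eqVneq u v) => [->|uv] //=.
by case/orP: gv => /andP[/eqP -> H]; move: H; case: (G v v).
Qed.

Lemma card_lt n (A A' : {set V}) v : A' \subset A :\ v -> v \in A ->
  #|A| <= n.+1 -> #|A'| <= n.
Proof.
move=> sub vA HA; have := subset_leq_card sub.
move: HA; rewrite (cardsD1 v A) vA add1n ltnS => h1 h2.
exact: leq_trans h2 h1.
Qed.

Lemma bad_nbr G b v : (forall x y, G x y = G y x) -> independent G (transv b) ->
  b v != tphi -> ~~ good G b v -> exists w, (w \in nbr G v) && (b w != tphi).
Proof.
move=> Hs HB bv gv.
case: (boolP [exists w, (w \in nbr G v) && (b w != tphi)]) => [/existsP //|H].
exfalso; apply: HB.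
have Hn : forall u, u \in nbr G v -> b u = tphi.
  move=> u un; apply/eqP; apply/negPn/negP => bu; move/existsP: H; apply.
  by exists u; rewrite un bu.
exists ((v, b v) |: [set (u, tphi) | u in nbr G v]); split.
- apply/subsetP => x; rewrite in_setU1; case/orP => [/eqP ->|/imsetP [u un ->]].
    by rewrite mem_transv.
  by rewrite mem_transv Hn.
- by apply/set0Pn; exists (v, b v); rewrite setU11.
- move=> u; rewrite big_setU1; last first.
    by apply/imsetP => [[u' _ [_ e]]]; move: bv; rewrite e eqxx.
  rewrite sum_phi inE.
  move: gv; rewrite /good.
  case: (I3_cases (b v)) bv => -> // _; rewrite /iascol /=.
  all: case: (eqVneq u v) => [->|uv]; rewrite ?eqxx /=; first by case: (G v v).
  all: by rewrite (Hs u v); case: (G v u).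
Qed.

Lemma main n : forall G b c, (forall x y, G x y = G y x) -> is_basis G (transv b) ->
  (forall v, b v != c v) -> #|nonphi b| <= n -> Concl G b c.
Proof.
elim: n => [|n IH] G b c Hs Hb Hbc Hn.
  apply: base => // v; move: Hn; rewrite leqn0 cards_eq0 => /eqP E.
  by apply/eqP; apply/negPn/negP => bv; move: (in_set0 v); rewrite -E inE bv.
case: (boolP (nonphi b == set0)) => [/eqP E|/set0Pn [v vN]].
  apply: base => // u; apply/eqP; apply/negPn/negP => bv.
  by move: (in_set0 u); rewrite -E inE bv.
have bv : b v != tphi by move: vN; rewrite inE.
have onestep : forall z, z \in nonphi b -> good G b z -> Concl G b c.
  move=> z zN gz; apply: (step_concl (z:=z)) => //.
  case: (step_pre z Hs Hb Hbc) => s1 s2 s3; apply: IH => //.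
  exact: card_lt (bmap_good gz) zN Hn.
case: (boolP (good G b v)) => gv; first exact: onestep gv.
case: (bad_nbr Hs Hb.1 bv gv) => w /andP [wn bw].
have wN : w \in nonphi b by rewrite inE.
case: (boolP (good G b w)) => gw; first exact: onestep gw.
apply: (step_concl (z:=w)) => //.
case: (step_pre w Hs Hb Hbc) => s1 s2 s3.
have vw : (v == w) = false.
  by apply/negP => /eqP e; move: wn; rewrite e inE eqxx.
have vnw : v \in nbr G w.
  by move: wn; rewrite !inE eq_sym vw /= Hs.
have g1 : good (apply_op (Ons w) G) (bmap G w b) v.
  move: gv; rewrite /good bmap_def vw /= vnw /=.
  by case: (I3_cases (b v)) bv => -> // _; case: (G v v).
apply: (step_concl (z:=v)) => //.
case: (step_pre v s1 s2 s3) => t1 t2 t3; apply: IH => //.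
apply: card_lt _ vN Hn.
apply: subset_trans (bmap_good g1) _.
by apply: setSD; apply: bmap_nonphi.
Qed.

Lemma apply_ops_cat s t G : apply_ops (s ++ t) G = apply_ops t (apply_ops s G).
Proof. by elim: s G => //= o s IH G; exact: IH. Qed.

Lemma induced_cat s t G x :
  induced (s ++ t) G x = induced t (apply_ops s G) (induced s G x).
Proof. by elim: s G x => //= o s IH G x; exact: IH. Qed.

Lemma apply_op_sym o G : (forall x y, G x y = G y x) ->
  forall x y, apply_op o G x y = apply_op o G y x.
Proof.
move=> Hs x y; case: o => v /=.
- by rewrite andbC Hs.
- by rewrite (eq_sym x y) (andbC (x \in nbr G v)) (Hs x y).
- by rewrite andbC Hs.
Qed.

Lemma apply_ops_sym s G : (forall x y, G x y = G y x) ->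
  forall x y, apply_ops s G x y = apply_ops s G y x.
Proof.
elim: s G => //= o s IH G Hs; apply: IH; exact: apply_op_sym.
Qed.

Lemma loops_apply l G0 : uniq l -> forall x y,
  apply_ops (map (@Oloop V) l) G0 x y =
  if (x == y) && (x \in l) then ~~ G0 x y else G0 x y.
Proof.
elim: l G0 => [|a l IH] G0 /=; first by move=> _ x y; rewrite andbF.
move=> /andP[al ul] x y; rewrite IH // in_cons /=.
case: (eqVneq x y) => [<-|xy] /=.
- case: (eqVneq x a) => [->|xa] /=; first by rewrite (negbTE al).
  by [].  

  case: (eqVneq x a) => [e|xa] /=; last by [].
  by rewrite e eq_sym in xy; rewrite /= (negbTE xy).

Qed.

Lemma loops_induced l G0 v : induced (map (@Oloop V) l) G0 (v, tphi) = (v, tphi).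
Proof. by elim: l G0 => //= a l IH G0; case: (v == a); apply: IH. Qed.
End S.

Theorem corollary4p2 (V : finType) (G : V -> V -> bool)
  (HGsym : forall x y, G x y = G y x)
  (b c : V -> 'I_3)
  (Hb : is_basis G (transv b))
  (Hbc : forall v, b v != c v) :
  (forall v w : V, v != w ->
     (in_fund G (transv b) (v, c v) (w, b w) <->
      in_fund G (transv b) (w, c w) (v, b v)))
  /\
  (forall H : V -> V -> bool,
     (forall x y, H x y = H y x) ->
     (forall v w : V, v != w ->
        (H v w <-> in_fund G (transv b) (v, c v) (w, b w))) ->
     exists s : seq (op V),
       (forall x y, apply_ops s G x y = H x y) /\
       [set induced s G x | x in transv b] = Phi V).
Proof.
have [s [h1 h2]] := @main _ #|nonphi b| G b c HGsym Hb Hbc (leqnn _).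
have Ss := apply_ops_sym s HGsym.
split.
  move=> v w vw; have wv : w != v by rewrite eq_sym.
  have a := h1 v w vw; have a' := h1 w v wv; rewrite Ss in a.
  by split => h; [apply/a'; apply/a | apply/a; apply/a'].
move=> H HH Hrel.
pose G0 := apply_ops s G.
pose l := [seq u <- enum V | G0 u u != H u u].
have ul : uniq l by rewrite filter_uniq // enum_uniq.
exists (s ++ map (@Oloop V) l); split.
  move=> x y; rewrite apply_ops_cat (loops_apply _ ul) mem_filter mem_enum andbT.
  case: (eqVneq x y) => [<-|xy] /=.
    by rewrite /G0; case: (apply_ops s G x x); case: (H x x).
  apply/idP/idP => h.
    by apply/(Hrel _ _ xy); apply/(h1 _ _ xy).
  by apply/(h1 _ _ xy); apply/(Hrel _ _ xy).
have -> : [set induced (s ++ map (@Oloop V) l) G x | x in transv b] =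
   [set induced (map (@Oloop V) l) G0 y | y in [set induced s G x | x in transv b]].
  by rewrite -[RHS]imset_comp; apply: eq_imset => x; exact: induced_cat.
rewrite h2 -[RHS]imset_id; apply: eq_in_imset => y /imsetP [u _ ->].
exact: loops_induced.
Qed.
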